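(* Let $n$ be a positive integer and let $\mathcal{P}$ be a nonzero linear partial difference operator with constant coefficients acting on functions $f:\mathbb{Z}^n\to\mathbb{C}$, i.e. $\mathcal{P} f(m_1,\dots,m_n)=\sum_{\alpha\in A} c_\alpha f(m_1+\alpha_1,\dots,m_n+\alpha_n)$ for a finite set $A\subset\mathbb{Z}^n$ and complex constants $c_\alpha$. Then there exists a function $f:\mathbb{Z}^n\to\mathbb{C}$ such that $\mathcal{P} f(m_1,\dots,m_n)=\delta(m_1,\dots,m_n)$ for all $(m_1,\dots,m_n)\in\mathbb{Z}^n$, where $\delta(m_1,\dots,m_n)=1$ if $(m_1,\dots,m_n)=(0,\dots,0)$ and $\delta(m_1,\dots,m_n)=0$ otherwise.
   Context: The operator $\mathcal{P}$ is called nonzero if it is not the zero operator, equivalently if its symbol, the Laurent polynomial $P(z_1,\dots,z_n)=\sum_{\alpha\in A}c_\alpha z_1^{\alpha_1}\cdots z_n^{\alpha_n}$, is not the zero Laurent polynomial. The paper remarks that the complex numbers may be replaced by any field. *)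

(* Defs.v *)
From mathcomp Require Import all_boot all_order all_algebra.
From mathcomp Require Import complex.
From mathcomp Require Import Rstruct.
Set Implicit Arguments. Unset Strict Implicit. Unset Printing Implicit Defensive.
Import GRing.Theory Num.Theory.
Local Open Scope ring_scope.

Notation CC := (complex Rdefinitions.R).

Definition diff_op (n : nat) (A : seq 'rV[int]_n) (c : 'rV[int]_n -> CC)
  (f : 'rV[int]_n -> CC) (m : 'rV[int]_n) : CC :=
  \sum_(a <- A) c a * f (m + a).

Definition delta (n : nat) (m : 'rV[int]_n) : CC := if m == 0 then 1 else 0.

(* Main.v *)
Require Import Defs.
From mathcomp Require Import all_boot all_order all_algebra.
From mathcomp Require Import complex Rstruct zify.
Import Order.TTheory GRing.Theory Num.Theory.
Local Open Scope ring_scope.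

Section Rec.
Variables (n : nat) (A : seq 'rV[int]_n) (c : 'rV[int]_n -> CC).
Variables (w : 'rV[int]_n -> int) (a0 : 'rV[int]_n).
Hypothesis wD : forall x y, w (x + y) = w x + w y.
Hypothesis a0A : a0 \in A.
Hypothesis uA : uniq A.
Hypothesis ca0 : c a0 != 0.
Hypothesis hmin : forall a, a \in A -> c a != 0 -> a != a0 -> w a0 < w a.

Lemma shiftE (p a b : 'rV[int]_n) : p + b + (a - b) = p + a.
Proof. by rewrite addrCA addrK addrC. Qed.

Definition mu x := w a0 - w x.

Fixpoint g (k : nat) (x : 'rV[int]_n) : CC :=
  match k with
  | 0 => 0
  | k'.+1 => if mu x < 0 then 0 else
     (delta (x - a0) - \sum_(a <- A | a != a0) c a * g k' (x + (a - a0))) / c a0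
  end.

Lemma g0 x : g 0 x = 0. Proof. by []. Qed.
Lemma gS k x : g k.+1 x = if mu x < 0 then 0 else
     (delta (x - a0) - \sum_(a <- A | a != a0) c a * g k (x + (a - a0))) / c a0.
Proof. by []. Qed.
Opaque g.

Lemma w0 : w 0 = 0.
Proof. by have := wD 0 0; rewrite addr0 => /eqP; rewrite -subr_eq subrr eq_sym => /eqP. Qed.

Lemma wN x : w (- x) = - w x.
Proof. by apply/eqP; rewrite -subr_eq0 opprK -wD addNr w0. Qed.

Lemma mu_step x a : a \in A -> c a != 0 -> a != a0 -> mu (x + (a - a0)) < mu x.
Proof. move=> aA ca na; have := hmin a aA ca na; rewrite /mu !wD wN; lia. Qed.

Lemma g_step k x : mu x < k%:Z -> g k x = g k.+1 x.
Proof.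
elim: k x => [|k IH] x hx.
  by rewrite gS g0 ifT.
rewrite (gS k.+1) (gS k); case: ifP => // hneg.
congr (_ / _); congr (_ - _); rewrite big_seq_cond [RHS]big_seq_cond; apply: eq_bigr => a /andP[aA na].
case: (eqVneq (c a) 0) => [->|ca]; first by rewrite !mul0r.
by rewrite (IH _ _) //; have := mu_step x a aA ca na; lia.
Qed.

Lemma g_stab k j x : mu x < k%:Z -> g k x = g (k + j) x.
Proof.
move=> hx; elim: j => [|j IH]; first by rewrite addn0.
by rewrite IH addnS g_step //; lia.
Qed.

Definition f x := g (absz (mu x)).+1 x.

Lemma g_f k x : mu x < k%:Z -> g k x = f x.
Proof.
move=> hx; rewrite /f.
rewrite (@g_stab k (maxn k (absz (mu x)).+1 - k) x hx).
rewrite (@g_stab (absz (mu x)).+1 (maxn k (absz (mu x)).+1 - (absz (mu x)).+1) x); last by lia.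
by rewrite !subnKC // ?leq_maxl ?leq_maxr.
Qed.

Lemma f_eq p : diff_op A c f p = delta p.
Proof.
rewrite /diff_op (bigD1_seq a0) //=.
have [hneg|hpos] := ltP (mu (p + a0)) 0.
  have -> : f (p + a0) = 0 by rewrite /f gS hneg.
  rewrite mulr0 add0r big1_seq ?/delta.
    case: eqP => // p0; move: hneg; rewrite /mu p0 add0r; lia.
  move=> a /andP[na aA].
  case: (eqVneq (c a) 0) => [->|ca]; first by rewrite mul0r.
  suff -> : f (p + a) = 0 by rewrite mulr0.
  have h := hmin a aA ca na.
  have hn : mu (p + a) < 0 by move: hneg h; rewrite /mu !wD; lia.
  by rewrite /f gS hn.
rewrite {1}/f gS ltNge hpos /=.
have -> : p + a0 - a0 = p.
  exact: (addrK a0 p).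
have -> : \sum_(a <- A | a != a0) c a * g `|mu (p + a0)| (p + a0 + (a - a0))
        = \sum_(a <- A | a != a0) c a * f (p + a).
  rewrite big_seq_cond [RHS]big_seq_cond; apply: eq_bigr => a /andP[aA na].
  case: (eqVneq (c a) 0) => [->|ca]; first by rewrite !mul0r.
  have -> : p + a0 + (a - a0) = p + a by exact: shiftE.
  rewrite g_f //.
  have := mu_step (p + a0) a aA ca na.
  have -> : p + a0 + (a - a0) = p + a by exact: shiftE.
  lia.
by rewrite mulrC divfK // subrK.
Qed.

End Rec.

Section W.
Variable n : nat.
Definition wt (N : int) (x : 'rV[int]_n) : int := \sum_(i < n) x 0 i * N ^+ i.

Lemma wtD N x y : wt N (x + y) = wt N x + wt N y.
Proof. by rewrite /wt -big_split; apply: eq_bigr => i _; rewrite mxE mulrDl. Qed.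

Lemma wtB N x y : wt N (x - y) = wt N x - wt N y.
Proof. by rewrite /wt -sumrB; apply: eq_bigr => i _; rewrite !mxE mulrBl. Qed.

Definition pd (d : 'rV[int]_n) : {poly int} := \sum_(i < n) (d 0 i)%:P * 'X^i.

Lemma pd_horner d N : (pd d).[N] = wt N d.
Proof. by rewrite /pd horner_sum; apply: eq_bigr => i _; rewrite hornerCM hornerXn. Qed.

Lemma pd_coef d (i : 'I_n) : (pd d)`_i = d 0 i.
Proof.
rewrite /pd coef_sum (bigD1 i) //= coefCM coefXn eqxx mulr1 big1 ?addr0 //.
move=> j nj; rewrite coefCM coefXn; case: eqP => [/val_inj ij|]; last by rewrite mulr0.
by move: nj; rewrite ij eqxx.
Qed.

Lemma pd_neq0 d : d != 0 -> pd d != 0.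
Proof.
apply: contraNneq => h; apply/eqP/rowP => j; rewrite mxE.
by rewrite -pd_coef h coef0.
Qed.
End W.
Arguments wt {n}. Arguments pd {n}. Arguments pd_neq0 {n}. Arguments pd_horner {n}. Arguments wtB {n}. Arguments wtD {n}.

Lemma nonroot (p : {poly int}) : p != 0 -> exists N : int, ~~ root p N.
Proof.
move=> p0.
set rs := [seq i%:Z | i <- iota 0 (size p)].
have urs : uniq rs by rewrite map_inj_uniq ?iota_uniq //; move=> x y [].
case: (boolP (all (root p) rs)) => [al|].
  by have := max_poly_roots p0 al urs; rewrite size_map size_iota ltnn.
by case/allPn => x _ hx; exists x.
Qed.

Lemma exists_min (T : eqType) (h : T -> int) (s : seq T) : s != [::] ->
  exists2 a, a \in s & forall b, b \in s -> h a <= h b.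
Proof.
elim: s => // x s IH _.
case: (eqVneq s [::]) => [->|sn].
  by exists x; rewrite ?mem_seq1 // => b; rewrite mem_seq1 => /eqP ->.
case: (IH sn) => a aS ha.
case: (leP (h x) (h a)) => hxa.
  exists x; first by rewrite mem_head.
  move=> b; rewrite in_cons => /orP[/eqP -> //|bs].
  exact: le_trans hxa (ha b bs).
exists a; first by rewrite in_cons aS orbT.
move=> b; rewrite in_cons => /orP[/eqP ->|bs]; last exact: ha.
exact: ltW.
Qed.

Theorem mainTheorem1 (n : nat) (hn : (0 < n)%N)
  (A : seq 'rV[int]_n) (c : 'rV[int]_n -> CC) :
  uniq A -> (exists2 a, a \in A & c a != 0) ->
  exists f : 'rV[int]_n -> CC, forall m : 'rV[int]_n, diff_op A c f m = delta m.
Proof.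
move=> uA [a1 a1A ca1].
pose Q := \prod_(a <- A) \prod_(b <- A | b != a) pd (b - a).
have Q0 : Q != 0.
  rewrite prodf_seq_neq0; apply/allP => a aA /=.
  rewrite prodf_seq_neq0; apply/allP => b bA /=; apply/implyP => nb.
  by apply: pd_neq0; rewrite subr_eq0.
have [N hN] := @nonroot Q Q0.
have winj : forall a b, a \in A -> b \in A -> b != a -> wt N b != wt N a.
  move=> a b aA bA nb; move: hN; rewrite rootE /Q horner_prod prodf_seq_neq0.
  move=> /allP h1; have := h1 a aA; rewrite /= horner_prod prodf_seq_neq0.
  move=> /allP h2; have := h2 b bA; rewrite /= nb /= pd_horner wtB subr_eq0.
  by [].
set S := [seq a <- A | c a != 0].
have Sn : S != [::].
  apply/eqP => h; have : a1 \in S by rewrite mem_filter ca1 a1A.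
  by rewrite h.
have [a0 a0S ha0] := @exists_min _ (wt N) S Sn.
move: a0S; rewrite mem_filter => /andP[ca0 a0A].
exists (@f n A c (wt N) a0) => m.
apply: (@f_eq n A c (wt N) a0) => //.
- exact: wtD.
- move=> a aA ca na.
  rewrite lt_neqAle ha0 ?mem_filter ?ca ?aA // andbT.
  by rewrite eq_sym; apply: winj.
Qed.
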